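(* Let $G$ be a finite connected graph (multiple edges allowed, no loops) with vertices $v_1,\dots,v_n$, and let $i\neq j$. The pair $\{v_i,v_j\}$ has order $1$ if and only if there is a path $\mathcal{P}$ in $G$ from $v_i$ to $v_j$ (with pairwise distinct edges) such that for every edge $e$ of $\mathcal{P}$ the graph $G\setminus\{e\}$ is disconnected. Consequently, $G$ is multiply connected if and only if its Laplacian is spread.
   Context: For $i\neq j$ let $c_{ij}$ be the number of edges joining $v_i$ and $v_j$, and let $c_{ii}=-\sum_{j\neq i}c_{ij}$. Let $M(G)=(c_{ij})\in M_n(\mathbb{Z})$; the Laplacian of $G$ is $-M(G)$. Let $e_1,\dots,e_n$ be the standard basis of $\mathbb{Z}^n$ and $E_{ij}=e_i-e_j$. For an integer $h>0$, a pair $\{v_i,v_j\}$ ($i\ne j$) has order $h$ if there is $S=(s_1,\dots,s_n)^t\in\mathbb{Z}^n$ with $M(G)S=hE_{ij}$ and $\gcd(s_1-s_n,\dots,s_{n-1}-s_n)=1$; equivalently, the image of $E_{ij}$ in $\mathbb{Z}^n/\mathrm{Im}(M(G))$ has order exactly $h$. A graph is multiply connected if removing any single edge leaves it connected. A matrix $M\in M_n(\mathbb{Z})$ is spread if the quotient map $\mathbb{Z}^n\to\mathbb{Z}^n/\mathrm{Im}(M)$ (where $\mathrm{Im}(M)$ is the $\mathbb{Z}$-span of the columns) is injective on $\{e_1,\dots,e_n\}$, i.e. no $E_{ij}$ ($i\neq j$) lies in $\mathrm{Im}(M)$. *)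

(* Defs.v *)
From mathcomp Require Import all_boot all_order all_algebra.
Set Implicit Arguments. Unset Strict Implicit. Unset Printing Implicit Defensive.
Import GRing.Theory Num.Theory.

(* A finite multigraph without loops on the vertex set 'I_N is given by the
   edge multiplicities c : 'I_N -> 'I_N -> nat (c u v = number of edges joining
   u and v), symmetric with zero diagonal. The c u v edges joining u,v are
   labelled 0, ..., (c u v).-1. *)
Definition multigraph (N : nat) (c : 'I_N -> 'I_N -> nat) : Prop :=
  (forall u v, c u v = c v u) /\ (forall u, c u u = 0%N).

Definition adj (N : nat) (c : 'I_N -> 'I_N -> nat) : rel 'I_N :=
  fun u v => (0 < c u v)%N.

Definition connected (N : nat) (c : 'I_N -> 'I_N -> nat) : Prop :=
  forall u v, connect (adj c) u v.

(* G \ {e} where e is one of the edges joining x and y. *)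
Definition remove_edge (N : nat) (c : 'I_N -> 'I_N -> nat) (x y : 'I_N)
  : 'I_N -> 'I_N -> nat :=
  fun u v => if ((u == x) && (v == y)) || ((u == y) && (v == x))
             then (c u v).-1 else c u v.

Definition is_bridge (N : nat) (c : 'I_N -> 'I_N -> nat) (x y : 'I_N) : Prop :=
  ~ connected (remove_edge c x y).

Definition multiply_connected (N : nat) (c : 'I_N -> 'I_N -> nat) : Prop :=
  forall x y : 'I_N, (0 < c x y)%N -> connected (remove_edge c x y).

(* A walk starting at x is a sequence of steps (y, k): go to y along the edge
   labelled k joining the current vertex and y. *)
Fixpoint walk_ok (N : nat) (c : 'I_N -> 'I_N -> nat) (x : 'I_N)
  (p : seq ('I_N * nat)) : bool :=
  if p is (y, k) :: p' then (k < c x y)%N && walk_ok c y p' else true.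

(* canonical name of the edge labelled k between x and y (unordered pair) *)
Definition edge_key (N : nat) (x y : 'I_N) (k : nat) : 'I_N * 'I_N * nat :=
  if (x <= y)%N then (x, y, k) else (y, x, k).

Fixpoint walk_edges (N : nat) (x : 'I_N) (p : seq ('I_N * nat))
  : seq ('I_N * 'I_N * nat) :=
  if p is (y, k) :: p' then edge_key x y k :: walk_edges y p' else [::].

Fixpoint walk_all_bridges (N : nat) (c : 'I_N -> 'I_N -> nat) (x : 'I_N)
  (p : seq ('I_N * nat)) : Prop :=
  if p is (y, _) :: p' then is_bridge c x y /\ walk_all_bridges c y p' else True.

Local Open Scope ring_scope.

Definition Mgraph (N : nat) (c : 'I_N -> 'I_N -> nat) : 'M[int]_N :=
  \matrix_(i, j) if i == j then - (\sum_(k | k != i) (c i k)%:Z)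
                 else (c i j)%:Z.

Definition laplacian (N : nat) (c : 'I_N -> 'I_N -> nat) : 'M[int]_N :=
  - Mgraph c.

Definition Eij (N : nat) (i j : 'I_N) : 'cV[int]_N :=
  delta_mx i 0 - delta_mx j 0.

(* {v_i, v_j} has order h (vertices v_1..v_n are 'I_n.+1, v_n = ord_max) *)
Definition has_order (n : nat) (M : 'M[int]_n.+1) (h : nat) (i j : 'I_n.+1)
  : Prop :=
  exists S : 'cV[int]_n.+1,
    M *m S = h%:Z *: Eij i j /\
    \big[gcdz/0]_(k < n.+1 | k != ord_max) (S k 0 - S ord_max 0) = 1.

Definition spread (N : nat) (M : 'M[int]_N) : Prop :=
  forall i j : 'I_N, i != j -> ~ exists S : 'cV[int]_N, M *m S = Eij i j.

(* Main.v *)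
Require Import Defs.
From mathcomp Require Import all_boot all_order all_algebra.
From mathcomp Require Import zify.
From Stdlib Require Import Classical.
Import Order.TTheory GRing.Theory Num.Theory.
Local Open Scope ring_scope.

Section G.
Variable N : nat.
Variable c : 'I_N -> 'I_N -> nat.
Hypothesis csym : forall u v, c u v = c v u.
Hypothesis c0 : forall u, c u u = 0%N.

Lemma MgE i j : Mgraph c i j = if i == j then - (\sum_(k | k != i) (c i k)%:Z) else (c i j)%:Z.
Proof. by rewrite /Mgraph mxE. Qed.


Lemma MgraphE (S : 'cV[int]_N) u :
  (Mgraph c *m S) u 0 = \sum_k (c u k)%:Z * (S k 0 - S u 0).
Proof.
rewrite mxE (bigD1 u) //=.
under eq_bigr => k Hk do rewrite MgE eq_sym (negbTE Hk).
rewrite MgE eqxx.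
rewrite [RHS](bigD1 u) //= c0 mul0r add0r.
under [RHS]eq_bigr => k Hk do rewrite mulrBr.
by rewrite sumrB -mulr_suml mulNr addrC.
Qed.

Lemma EijE (x y u : 'I_N) : Eij x y u 0 = ((u == x)%:R - (u == y)%:R : int).
Proof. by rewrite /Eij !mxE /= !andbT. Qed.

Lemma remove_sym x y u v : remove_edge c x y u v = remove_edge c x y v u.
Proof.
rewrite /remove_edge csym; congr (if _ then _ else _).
by rewrite orbC (andbC (u == y)) (andbC (u == x)).
Qed.

Lemma remove_other x y u v :
  ~~ (((u == x) && (v == y)) || ((u == y) && (v == x))) ->
  remove_edge c x y u v = c u v.
Proof. by rewrite /remove_edge => /negbTE ->. Qed.

Lemma adj_rem_sym x y : symmetric (adj (remove_edge c x y)).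
Proof. by move=> u v; rewrite /adj remove_sym. Qed.

Lemma bridge_not_conn x y : connected c -> is_bridge c x y ->
  ~~ connect (adj (remove_edge c x y)) x y.
Proof.
move=> Hc Hb; apply/negP => Hxy; apply: Hb => u v.
apply: (connect_sub _ (Hc u v)) => a b Hab.
case: (boolP (((a == x) && (b == y)) || ((a == y) && (b == x)))) => H.
  case/orP: H => /andP[/eqP-> /eqP->] //.
  by rewrite (sym_connect_sym (adj_rem_sym x y)).
by apply: connect1; rewrite /adj remove_other.
Qed.

Lemma bridge_S x y : connected c -> is_bridge c x y -> (0 < c x y)%N ->
  exists S, Mgraph c *m S = Eij x y.
Proof.
move=> Hc Hb cxy.
set c' := remove_edge c x y.
set A := fun v => connect (adj c') x v.
have nAy : ~~ A y by apply: bridge_not_conn.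
have Ax : A x by apply: connect0.
have xy : x != y by apply/eqP => E; move: cxy; rewrite E c0.
have cxy1 : c x y = 1%N.
  have : c' x y = (c x y).-1 by rewrite /c' /remove_edge !eqxx.
  case E: (c' x y) => [|k] H.
    by move: cxy H; clear; lia.
  by move: nAy; rewrite /A (connect1 (e := adj c') (x := x) (y := y)) // /adj E.
have cross : forall u k, A u -> ~~ A k -> c u k = ((u == x) && (k == y)) :> nat.
  move=> u k Au nAk.
  case: (boolP ((u == x) && (k == y))) => [/andP[/eqP-> /eqP->] //|H].
  have H2 : ~~ (((u == x) && (k == y)) || ((u == y) && (k == x))).
    rewrite negb_or H /=; apply/negP => /andP[/eqP Eu _].
    by move: nAy; rewrite -Eu Au.
  rewrite -(remove_other _ _ _ _ H2) -/c'.
  case E: (c' u k) => [//|m].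
  by move: nAk; rewrite /A (connect_trans Au) // connect1 // /adj E.
pose S : 'cV[int]_N := \col_v (if A v then 0 else 1).
have SE : forall v, S v 0 = if A v then 0 else 1 by move=> v; rewrite /S mxE.
exists S.
apply/matrixP => u v; rewrite (ord1 v) MgraphE EijE.
case Au: (A u); rewrite SE Au.
- have uy : (u == y) = false by apply/negbTE; apply: contraNneq nAy => <-.
  rewrite uy subr0 (bigD1 y) //= big1 => [|k ky].
    by rewrite SE (negbTE nAy) subr0 mulr1 (cross u y) // eqxx andbT; case: (u == x).
  rewrite SE; case Ak: (A k); first by rewrite subrr mulr0.
  by rewrite (cross u k) // ?Ak // (negbTE ky) andbF mul0r.
- have ux : (u == x) = false by apply/negbTE; apply: contraNneq (negbT Au) => ->.
  rewrite ux sub0r (bigD1 x) //= big1 => [|k kx].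
    rewrite SE Ax csym (cross x u) ?Au // eqxx /= addr0.
    by case: (u == y); rewrite /= ?mul1r ?mul0r ?oppr0.
  rewrite SE; case Ak: (A k); last by rewrite subrr mulr0.
  by rewrite csym (cross k u) ?Au // (negbTE kx) mul0r.
Qed.

Lemma walk_S x p : connected c -> walk_ok c x p -> walk_all_bridges c x p ->
  exists S, Mgraph c *m S = Eij x (last x (map fst p)).
Proof.
move=> Hc; elim: p x => [|[y k] p IH] x /=.
  by move=> _ _; exists 0; rewrite mulmx0 /Eij subrr.
move=> /andP[Hk Hw] [Hb Hwb].
have [S1 H1] := bridge_S _ _ Hc Hb (leq_ltn_trans (leq0n k) Hk).
have [S2 H2] := IH y Hw Hwb.
by exists (S1 + S2); rewrite mulmxDr H1 H2 /Eij addrA subrK.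
Qed.


Lemma sum_pred1 (P : pred 'I_N) a : \sum_(u | P u) ((u == a)%:R : int) = (P a)%:R.
Proof.
rewrite big_mkcond /= (bigD1 a) //= eqxx big1 => [|u ua].
  by rewrite addr0; case: (P a).
by rewrite (negbTE ua); case: (P u).
Qed.

Lemma ge_one_term (P : pred 'I_N) (F : 'I_N -> int) a :
  (forall u, P u -> 0 <= F u) -> P a -> F a <= \sum_(u | P u) F u.
Proof.
move=> H Pa; rewrite (bigD1 a) //= lerDl; apply: sumr_ge0 => u /andP[Pu _]; auto.
Qed.

Lemma ge_two_terms (P : pred 'I_N) (F : 'I_N -> int) a b :
  (forall u, P u -> 0 <= F u) -> P a -> P b -> a != b ->
  F a + F b <= \sum_(u | P u) F u.
Proof.
move=> H Pa Pb ab; rewrite (bigD1 a) //= lerD2l (bigD1 b) /=; last by rewrite Pb eq_sym ab.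
rewrite lerDl; apply: sumr_ge0 => u /andP[/andP[Pu _] _]; auto.
Qed.

Lemma exists_pos (P : pred 'I_N) (F : 'I_N -> int) :
  0 < \sum_(k | P k) F k -> exists k, P k /\ 0 < F k.
Proof.
case: (boolP [exists k, P k && (0 < F k)]) => [/existsP[k /andP[]]|/existsPn H]; first by eauto.
move=> Hs; have : \sum_(k | P k) F k <= 0.
  by apply: sumr_le0 => k Pk; move: (H k); rewrite Pk /= leNgt.
by rewrite leNgt Hs.
Qed.

Section Core.
Variable S : 'cV[int]_N.
Variables i j : 'I_N.
Hypothesis HS : Mgraph c *m S = Eij i j.
Hypothesis ij : i != j.
Let s u := S u 0.

Lemma D_E u : \sum_k (c u k)%:Z * (s k - s u) = (u == i)%:R - (u == j)%:R.
Proof. by rewrite /s -MgraphE HS EijE. Qed.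

Lemma step x w : (0 < c x w)%N -> s x < s w ->
  [/\ c x w = 1%N, s w = s x + 1, s i <= s x, s x < s j & is_bridge c x w].
Proof.
move=> cxw sxw.
pose P := [pred u | s u <= s x].
pose f := fun u k => (c u k)%:Z * (s k - s u).
have cut : \sum_(u | P u) \sum_(k | ~~ P k) f u k = (P i)%:R - (P j)%:R.
  have : \sum_(u | P u) \sum_k f u k = \sum_(u | P u) ((u == i)%:R - (u == j)%:R).
    by apply: eq_bigr => u _; exact: D_E.
  rewrite sumrB !sum_pred1 => <-.
  under [RHS]eq_bigr => u _ do rewrite (bigID P) /=.
  rewrite big_split /=.
  set X := \sum_(u | P u) \sum_(k | P k) f u k.
  suff -> : X = 0 by rewrite add0r.
  have : X = - X.
    rewrite {1}/X exchange_big /= -sumrN; apply: eq_bigr => a _.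
    rewrite -sumrN; apply: eq_bigr => b _.
    by rewrite /f csym -mulrN opprB.
  move=> H; lia.
have Px : P x by rewrite /= lexx.
have nPw : ~~ P w by rewrite /= -ltNge.
have pos : forall u k, P u -> ~~ P k -> 0 < s k - s u.
  move=> u k /= Pu; rewrite -ltNge => Pk; rewrite subr_gt0; exact: le_lt_trans Pu Pk.
have fge0 : forall u k, P u -> ~~ P k -> 0 <= f u k.
  by move=> u k Pu Pk; apply: mulr_ge0 => //; apply: ltW; apply: pos.
pose G := fun u => \sum_(k | ~~ P k) f u k.
have Gge0 : forall u, P u -> 0 <= G u by move=> u Pu; apply: sumr_ge0 => k Pk; auto.
have F1 : G x <= (P i)%:R - (P j)%:R by rewrite -cut; apply: ge_one_term.
have F2 : f x w <= G x by apply: ge_one_term => // k Pk; auto.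
have hle : ((P i)%:R - (P j)%:R : int) <= 1 by case: (P i); case: (P j).
have fxw : f x w = 1.
  move: F1 F2 hle (pos x w Px nPw) cxw; rewrite /f; nia.
have cxw1 : c x w = 1%N by move: fxw (pos x w Px nPw); rewrite /f; nia.
have sw : s w = s x + 1 by move: fxw (pos x w Px nPw); rewrite /f; nia.
have Pij : P i && ~~ P j.
  by move: F1 F2 fxw; case: (P i); case: (P j) => //=; lia.
have zero : forall u k, P u -> ~~ P k -> ~~ ((u == x) && (k == w)) -> c u k = 0%N.
  move=> u k Pu Pk H.
  have fuk : f u k <= 0.
    case: (eqVneq u x) => [Eu|ux].
      subst u; have kw : w != k by apply: contraNneq H => ->; rewrite !eqxx.
      have : f x w + f x k <= G x by apply: ge_two_terms => // k' Pk'; auto.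
      by move: F1 fxw hle; lia.
    have : G x + G u <= (P i)%:R - (P j)%:R.
      by rewrite -cut; apply: ge_two_terms => //; rewrite eq_sym.
    have : f u k <= G u by apply: ge_one_term => // k' Pk'; auto.
    by move: F2 fxw hle; lia.
  by move: fuk (pos u k Pu Pk); rewrite /f; nia.
move: Pij => /andP[Pi nPj].
split => //; first by move: nPj; rewrite /= -ltNge.
move=> Hcon; have := Hcon x w; move/connectP => [p pth lst].
have cl : forall a b, P a -> adj (remove_edge c x w) a b -> P b.
  move=> a b Pa Hab; apply/negPn/negP => nPb; move: Hab; rewrite /adj.
  case: (boolP ((a == x) && (b == w))) => [/andP[/eqP-> /eqP->]|H].
    by rewrite /remove_edge !eqxx /= cxw1.
  rewrite remove_other ?zero //.
  rewrite negb_or H /=; apply/negP => /andP[/eqP E _]; move: nPw; by rewrite -E Pa.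
have : forall q a, P a -> path (adj (remove_edge c x w)) a q -> P (last a q).
  elim => [//|b q IHq] a Pa /= /andP[Hab Hq]; exact: IHq _ (cl _ _ Pa Hab) Hq.
move=> /(_ p x Px pth); rewrite -lst; by move/negP: nPw.
Qed.

Lemma pos_term u k : 0 < (c u k)%:Z * (s k - s u) -> (0 < c u k)%N && (s u < s k).
Proof.
case E: (c u k) => [|m] H; first by move: H; rewrite mul0r ltxx.
by move: H; rewrite pmulr_rgt0 // subr_gt0.
Qed.

Lemma start_up : exists k, (0 < c i k)%N && (s i < s k).
Proof.
have := D_E i; rewrite eqxx (negbTE ij) subr0 => H.
have [k [_ Hk]] : exists k, true /\ 0 < (c i k)%:Z * (s k - s i).
  by apply: exists_pos; rewrite H.
by exists k; apply: pos_term.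
Qed.

Lemma next_up x w : (0 < c x w)%N -> s x < s w -> w != j ->
  exists k, (0 < c w k)%N && (s w < s k).
Proof.
move=> cxw sxw wj; have [cxw1 sw si sj _] := step x w cxw sxw.
have wi : w != i by apply/eqP => E; move: si; rewrite -E; lia.
have := D_E w; rewrite (negbTE wi) (negbTE wj) subrr (bigD1 x) //=.
rewrite csym cxw1; set T := (X in _ + X = 0) => H.
have : 0 < T by lia.
move/exists_pos => [k [_ Hk]].
by exists k; apply: pos_term.
Qed.

Lemma walk_from m x : s j - s x <= m%:Z ->
  (x == j) || [exists w, (0 < c x w)%N && (s x < s w)] ->
  exists p, [/\ walk_ok c x p, last x (map fst p) = j, uniq (walk_edges x p),
     walk_all_bridges c x p &
     all (fun e : 'I_N * 'I_N * nat => (s x <= s e.1.1) && (s x <= s e.1.2)) (walk_edges x p)].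
Proof.
elim: m x => [|m IH] x Hm; (case/orP => [/eqP->|/existsP[w /andP[cxw sxw]]]; first by exists [::]);
  have [cxw1 sw si sj br] := step x w cxw sxw.
  by move: Hm sj; lia.
have Hw : (w == j) || [exists k, (0 < c w k)%N && (s w < s k)].
  case: (eqVneq w j) => [->|wj]; first by [].
  by apply/orP; right; apply/existsP; have [k Hk] := next_up x w cxw sxw wj; exists k.
have Hm' : s j - s w <= m%:Z by move: Hm; rewrite sw; lia.
have [p [H1 H2 H3 H4 H5]] := IH w Hm' Hw.
exists ((w, 0%N) :: p); split => /=.
- by rewrite cxw H1.
- exact: H2.
- rewrite H3 andbT; apply/negP => /(allP H5); rewrite /edge_key.
  by case: ifP => _ /= /andP[h1 h2]; move: h1 h2 sxw; lia.
- by split.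
- apply/andP; split.
    by rewrite /edge_key; case: ifP => _ /=; apply/andP; split; rewrite ?lexx ?ltW.
  apply/allP => e /(allP H5) /andP[a b]; apply/andP; split; exact: le_trans (ltW sxw) _.
Qed.

End Core.
End G.

Lemma big_gcd_dvd (I : eqType) (r : seq I) (P : pred I) (F : I -> int) k :
  k \in r -> P k -> (\big[gcdz/0]_(i <- r | P i) F i %| F k)%Z.
Proof.
elim: r => [//|a r IH]; rewrite inE big_cons => /orP[/eqP-> Pa|kr Pk].
  by rewrite Pa dvdz_gcdl.
case: (P a); last exact: IH.
exact: dvdz_trans (dvdz_gcdr _ _) (IH kr Pk).
Qed.

Lemma gcd_one n (c : 'I_n.+1 -> 'I_n.+1 -> nat) (S : 'cV[int]_n.+1) i j :
  (forall u, c u u = 0%N) -> Mgraph c *m S = Eij i j -> i != j ->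
  \big[gcdz/0]_(k < n.+1 | k != ord_max) (S k 0 - S ord_max 0) = 1.
Proof.
move=> c0 HS ij.
set d := \big[gcdz/0]_(k < _ | _) _.
have dk : forall k, (S k 0 - S ord_max 0) \in dvdz d.
  move=> k; case: (eqVneq k ord_max) => [->|kn]; first by rewrite subrr dvdz0.
  by apply: big_gcd_dvd => //; rewrite mem_index_enum.
have d0 : 0 <= d by rewrite /d; elim/big_rec: _ => // a b _ _.
have : (Mgraph c *m S) i 0 \in dvdz d.
  rewrite (MgraphE _ _ c0); apply: rpred_sum => k _; apply: dvdz_mull.
  have -> : S k 0 - S i 0 = (S k 0 - S ord_max 0) - (S i 0 - S ord_max 0).
    by rewrite opprB addrA subrK.
  exact: rpredB (dk k) (dk i).
rewrite HS EijE eqxx (negbTE ij) subr0 dvdz1 => /eqP.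
by move: d0; lia.
Qed.

Theorem corollary2p3 (n : nat) (c : 'I_n.+1 -> 'I_n.+1 -> nat) :
  multigraph c -> connected c ->
  (forall i j : 'I_n.+1, i != j ->
     (has_order (Mgraph c) 1 i j <->
      exists p : seq ('I_n.+1 * nat),
        [/\ walk_ok c i p, last i (map fst p) = j,
            uniq (walk_edges i p) & walk_all_bridges c i p]))
  /\ (multiply_connected c <-> spread (laplacian c)).
Proof.
move=> [csym c0] Hc; split.
- move=> i j ij; split.
  + move=> [S [HS _]]; rewrite scale1r in HS.
    have [k Hk] := start_up _ _ c0 _ _ _ HS ij.
    have Hm : S j 0 - S i 0 <= (absz (S j 0 - S i 0)%R)%:Z by rewrite abszE ler_norm.
    have Hx : (i == j) || [exists w, (0 < c i w)%N && (S i 0 < S w 0)].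
      by apply/orP; right; apply/existsP; exists k.
    have [p [H1 H2 H3 H4 _]] := walk_from _ _ csym c0 _ _ _ HS ij _ i Hm Hx.
    by exists p.
  + move=> [p [H1 H2 H3 H4]].
    have [S HS] := walk_S _ _ csym c0 _ _ Hc H1 H4.
    rewrite H2 in HS.
    exists S; split; first by rewrite scale1r.
    exact: gcd_one c0 HS ij.
- split.
  + move=> MC i j ij [S HS].
    rewrite /laplacian mulNmx -mulmxN in HS.
    have [w /andP[ciw siw]] := start_up _ _ c0 _ _ _ HS ij.
    have [_ _ _ _ br] := step _ _ csym c0 _ _ _ HS ij _ _ ciw siw.
    by apply: br; apply: MC.
  + move=> SP x y cxy; apply: NNPP => ncon.
    have xy : x != y by apply/eqP => E; move: cxy; rewrite E c0.
    have Hw : walk_ok c x [:: (y, 0%N)] by rewrite /= cxy.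
    have [S HS] := walk_S _ _ csym c0 x [:: (y, 0%N)] Hc Hw (conj ncon I).
    apply: (SP x y xy); exists (- S).
    by rewrite /laplacian mulNmx mulmxN opprK.
Qed.
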